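(* Let $X=(x_1,\dots,x_k)$ be a composition of a positive integer $n$, and let $\ell\ge2$. The set of Dyck words of semilength $n$ with free composition $X$ and exactly $\ell$ hits is in bijection with the set of Motzkin paths of length $k-1$ having exactly $\ell-2$ flat steps at height zero.
   Context: A Dyck word of semilength $n$ is a word with $n$ zeros and $n$ ones in which every prefix has at least as many zeros as ones; it has a hit at position $2j$ ($0\le j\le n$) if its prefix of length $2j$ has exactly $j$ zeros and $j$ ones (positions $0$ and $2n$ included). Indices $i,i+1$ are linked if the $i$-th and $(i+1)$-st $0$ occupy adjacent positions and the $i$-th and $(i+1)$-st $1$ occupy adjacent positions; free blocks are maximal intervals of $\{1,\dots,n\}$ of linked consecutive indices, and the free composition lists their sizes from left to right. A Motzkin path of length $k$ is a lattice path from $(0,0)$ to $(k,0)$ with steps $(1,1)$, $(1,-1)$, $(1,0)$ (flat steps) never going below the $x$-axis; a flat step is at height zero if it lies on the $x$-axis. *)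

(* Defs.v *)
From mathcomp Require Import all_boot.
Set Implicit Arguments. Unset Strict Implicit. Unset Printing Implicit Defensive.

(* Words over {0,1}: the letter 0 is [false], the letter 1 is [true]. *)

Definition is_composition (n : nat) (X : seq nat) : bool :=
  all (fun x => 0 < x) X && (sumn X == n).

Definition is_dyck (n : nat) (w : seq bool) : bool :=
  [&& size w == n.*2, count (pred1 false) w == n, count (pred1 true) w == n &
      all (fun i => count (pred1 true) (take i w) <= count (pred1 false) (take i w))
          (iota 0 (size w).+1)].

Definition hits (n : nat) (w : seq bool) : nat :=
  count (fun j => (count (pred1 false) (take j.*2 w) == j) &&
                  (count (pred1 true) (take j.*2 w) == j)) (iota 0 n.+1).

Definition letter_pos (b : bool) (w : seq bool) : seq nat :=
  [seq j <- iota 0 (size w) | nth false w j == b].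

(* The i-th (1-based) occurrence of letter b in w. *)
Definition occ (b : bool) (w : seq bool) (i : nat) : nat :=
  nth 0 (letter_pos b w) i.-1.

Definition linked (w : seq bool) (i : nat) : bool :=
  (occ false w i.+1 == (occ false w i).+1) && (occ true w i.+1 == (occ true w i).+1).

(* Sizes of maximal blocks, given the link booleans between consecutive
   indices (cur = size of the current block). *)
Fixpoint blocks (l : seq bool) (cur : nat) : seq nat :=
  match l with
  | [::] => [:: cur]
  | b :: l' => if b then blocks l' cur.+1 else cur :: blocks l' 1
  end.

Definition free_composition (n : nat) (w : seq bool) : seq nat :=
  if n is 0 then [::]
  else blocks [seq linked w i | i <- iota 1 n.-1] 1.

(* Motzkin steps: Some true = up (1,1), Some false = down (1,-1), None = flat. *)
Fixpoint motzkin_from (h : nat) (s : seq (option bool)) : bool :=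
  match s with
  | [::] => h == 0
  | Some true :: s' => motzkin_from h.+1 s'
  | Some false :: s' => (0 < h) && motzkin_from h.-1 s'
  | None :: s' => motzkin_from h s'
  end.

Definition is_motzkin (s : seq (option bool)) : bool := motzkin_from 0 s.

Fixpoint flat0_from (h : nat) (s : seq (option bool)) : nat :=
  match s with
  | [::] => 0
  | Some true :: s' => flat0_from h.+1 s'
  | Some false :: s' => flat0_from h.-1 s'
  | None :: s' => (h == 0) + flat0_from h s'
  end.

Definition flat_zero (s : seq (option bool)) : nat := flat0_from 0 s.

(* Main.v *)
Require Import Defs.
From mathcomp Require Import all_boot.
From mathcomp Require Import zify.
Set Implicit Arguments. Unset Strict Implicit. Unset Printing Implicit Defensive.

Definition cF (s : seq bool) := count (pred1 false) s.
Definition cnt (b : bool) (w : seq bool) := count (pred1 b) w.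
Ltac foldc := repeat match goal with
 | H : context[@count ?T (@PredOfSimpl.coerce ?T' (@pred1 ?E ?b)) ?w] |- _ =>
     change (@count T (@PredOfSimpl.coerce T' (@pred1 E b)) w) with (cnt b w) in H
 | |- context[@count ?T (@PredOfSimpl.coerce ?T' (@pred1 ?E ?b)) ?w] =>
     change (@count T (@PredOfSimpl.coerce T' (@pred1 E b)) w) with (cnt b w)
 | H : context[@take (Equality.sort ?E) ?k ?s] |- _ =>
     change (@take (Equality.sort E) k s) with (@take bool k s) in H
 | |- context[@take (Equality.sort ?E) ?k ?s] =>
     change (@take (Equality.sort E) k s) with (@take bool k s)
 end.
Ltac lia' := foldc; try (rewrite -!muln2 in * ); lia.


Lemma letter_pos_cons b c w :
  letter_pos b (c :: w) =
  if c == b then 0 :: map S (letter_pos b w) else map S (letter_pos b w).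
Proof.
rewrite /letter_pos /=.
have -> : iota 1 (size w) = map S (iota 0 (size w)).
  by rewrite (iotaDl 1 0).
by rewrite filter_map; case: (c == b).
Qed.

Lemma size_lp b w : size (letter_pos b w) = count (pred1 b) w.
Proof.
elim: w => [|c w IH] //; rewrite letter_pos_cons /=.
by case: (c == b) => /=; rewrite size_map IH.
Qed.

Lemma occP b w i t : i < count (pred1 b) w ->
  (nth 0 (letter_pos b w) i < t) = (i < count (pred1 b) (take t w)).
Proof.
elim: w i t => [|c w IH] i t //=.
rewrite letter_pos_cons; case: t => [|t] /=.
  by rewrite ltn0.
case cb: (c == b) => /= Hi.
  case: i Hi => [|i] Hi //=.
  rewrite (nth_map 0); last by rewrite size_lp; move: Hi; rewrite /= add1n ltnS; lia'.
  by rewrite ltnS IH //; move: Hi; rewrite /= add1n ltnS; lia'.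
rewrite (nth_map 0); last by rewrite size_lp.
by rewrite ltnS IH.
Qed.

Lemma lp_mem b w i : i < count (pred1 b) w ->
  nth false w (nth 0 (letter_pos b w) i) = b.
Proof.
elim: w i => [|c w IH] i //=.
rewrite letter_pos_cons.
case cb: (c == b) => /= Hi.
  case: i Hi => [|i] Hi /=; first by apply/eqP.
  rewrite (nth_map 0); last by rewrite size_lp; lia'.
  by rewrite /= IH //; lia'.
rewrite (nth_map 0); last by rewrite size_lp; lia'.
by rewrite /= IH.
Qed.

Fixpoint nx (b : bool) (w : seq bool) : seq bool :=
  match w with
  | [::] => [::]
  | c :: w' => if c == b then (head (~~ b) w' == b) :: nx b w' else nx b w'
  end.

Lemma size_nx b w : size (nx b w) = count (pred1 b) w.
Proof. by elim: w => [|c w IH] //=; case: (c == b) => /=; rewrite IH. Qed.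

Lemma head_lp b w : 0 < count (pred1 b) w ->
  (nth 0 (letter_pos b w) 0 == 0) = (head (~~ b) w == b).
Proof.
case: w => [|c w] //= H; rewrite letter_pos_cons.
case cb: (c == b) => //=.
rewrite (nth_map 0) //; rewrite size_lp; move: H; rewrite /= cb; lia'.
Qed.

Lemma nx_link b w i : i.+1 < count (pred1 b) w ->
  (nth 0 (letter_pos b w) i.+1 == (nth 0 (letter_pos b w) i).+1)
  = nth false (nx b w) i.
Proof.
elim: w i => [|c w IH] i //=.
rewrite letter_pos_cons.
case cb: (c == b) => /= Hi.
  case: i Hi => [|i] Hi /=.
    rewrite (nth_map 0); last by rewrite size_lp; lia'.
    by rewrite eqSS head_lp //; lia'.
  rewrite (nth_map 0); last by rewrite size_lp; lia'.
  rewrite (nth_map 0); last by rewrite size_lp; lia'.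
  by rewrite eqSS IH //; lia'.
rewrite (nth_map 0); last by rewrite size_lp; lia'.
rewrite (nth_map 0); last by rewrite size_lp; lia'.
by rewrite eqSS IH.
Qed.

Lemma run_cmp w i j : i < count (pred1 false) w -> j < count (pred1 true) w ->
  (nth 0 (letter_pos false w) i < nth 0 (letter_pos true w) j) =
  (if head true w then cF (take i (nx false w)) < cF (take j (nx true w))
   else cF (take i (nx false w)) <= cF (take j (nx true w))).
Proof.
elim: w i j => [|c w IH] i j //=.
rewrite !letter_pos_cons.
case: c => /= Hi Hj.
  rewrite (nth_map 0); last by rewrite size_lp; lia'.
  case: j Hj => [|j] Hj /=; first by rewrite ltn0.
  rewrite (nth_map 0); last first. by rewrite size_lp; lia'.
  rewrite ltnS IH; [|lia'|lia'].
  clear IH; move: Hi Hj; case: w => [|c' w] //= _ _.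
  by case: c' => /=; rewrite ?add0n ?add1n ?ltnS.
rewrite [X in _ < X](nth_map 0); last by rewrite size_lp; lia'.
case: i Hi => [|i] Hi /=; first by [].
rewrite (nth_map 0); last by rewrite size_lp; lia'.
rewrite ltnS IH; [|lia'|lia'].
clear IH; move: Hi Hj; case: w => [|c' w] //= _ _.
by case: c' => /=; rewrite ?add0n ?add1n ?ltnS.
Qed.

Lemma last_nx b w : last false (nx b w) = false.
Proof.
elim: w => [|c w IH] //=; case: (c == b) => //=.
case E: (nx b w) => [|y s].
  case: w IH E => [|c' w'] /= IH E; first by case: b.
  by case cb: (c' == b) E.
by rewrite E in IH.
Qed.

Lemma nx_cnt c w : cF (nx false (c :: w)) + c = cF (nx true (c :: w)) + ~~ last c w.
Proof.
elim: w c => [|c' w IH] c; first by case: c.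
move: (IH c'); rewrite /cF; case: c; case: c' => /=; lia.
Qed.

Fixpoint dec (f : nat) (z : bool) (u v : seq bool) : seq bool :=
  if f is f'.+1 then
    (if z then (if u is b :: u' then false :: dec f' b u' v else [::])
     else (if v is b :: v' then true :: dec f' (~~ b) u v' else [::]))
  else [::].

Lemma dec_nil f z : dec f z [::] [::] = [::].
Proof. by case: f z => [|f] []. Qed.

Lemma dec_enc w f : size w <= f ->
  dec f (~~ head true w) (nx false w) (nx true w) = w.
Proof.
elim: w f => [|c w IH] f; first by rewrite dec_nil.
case: f => [|f] //= Hs.
case: c => /=.
  case: w IH Hs => [|c' w] IH Hs /=; first by rewrite dec_nil.
  by rewrite -[in RHS](IH f) //=; case: (c') => /=.
have -> : (head true w == false) = ~~ head true w by case: (head true w).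
by rewrite IH.
Qed.

Lemma cF_last0 v : last false v = false -> cF v = 0 -> v = [::].
Proof.
case/lastP: v => // s x; rewrite last_rcons => ->.
by rewrite /cF -cats1 count_cat /= addn1.
Qed.

Lemma last_tail (b : bool) u : last false (b :: u) = false -> last false u = false.
Proof. by case: u. Qed.

Lemma enc_dec f z u v : size u + size v <= f ->
  (if z then cF u = cF v else cF v = (cF u).+1) ->
  last false u = false -> last false v = false ->
  [/\ nx false (dec f z u v) = u, nx true (dec f z u v) = v,
      size (dec f z u v) = size u + size v &
      ohead (dec f z u v) = (if z then (if u is [::] then None else Some false) else Some true)].
Proof.
elim: f z u v => [|f IH] z u v.
  case: u => [|//]; case: v => [|//] _ /=.
  by case: z.
case: z => /= Hs Hc Hu Hv.
  case: u Hs Hc Hu => [|b u] Hs Hc Hu.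
    by rewrite (cF_last0 Hv (esym Hc)).
  have Hu' := last_tail Hu.
  have Hbu : b -> u != [::] by case: u Hu {Hu' Hs Hc} => //= ->.
  have [] := IH b u v; [by move: Hs => /=; lia| |done|done|].
    by clear -Hc; case: b Hc => /=; rewrite /cF /=; lia.
  move=> E1 E2 E3 Ho; rewrite /= E1 E2 E3; split => //.
  congr (_ :: _).
  clear -Hbu Ho; case: b Hbu Ho => [/(_ isT)|_] Ho.
    by move: Ho; case: u => // ? ? _; case: (dec _ _ _ _) => //= ? ? [->].
  by move: Ho; case: (dec _ _ _ _) => //= ? ? [->].
case: v Hs Hc Hv => [|b v] Hs Hc Hv; first by move: Hc; rewrite /cF.
have Hv' := last_tail Hv.
have [] := IH (~~ b) u v; [by move: Hs => /=; lia| |done|done|].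
  by clear -Hc; case: b Hc => /=; rewrite /cF /=; lia.
move=> E1 E2 E3 Ho; rewrite /= E1 E2 E3; split => //.
congr (_ :: _).
clear -Ho; case: b Ho => /= Ho.
  by move: Ho; case: (dec _ _ _ _) => //= ? ? [->].
by move: Ho; case: (dec _ _ _ _) => [|? ?] //=; case: u => // ? ? [->].
by rewrite addnS.
Qed.

Lemma count_take_le (T : Type) (a : pred T) t (s : seq T) : count a (take t s) <= count a s.
Proof. by rewrite -{2}(cat_take_drop t s) count_cat leq_addr. Qed.

Lemma prefix_iff w n : count (pred1 false) w = n -> count (pred1 true) w = n ->
  (forall t, count (pred1 true) (take t w) <= count (pred1 false) (take t w)) <->
  (forall i, i < n -> nth 0 (letter_pos false w) i < nth 0 (letter_pos true w) i).
Proof.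
move=> Hf Ht; split.
  move=> H i Hi.
  set q := nth 0 (letter_pos true w) i.
  have H1 : i < count (pred1 true) (take q.+1 w) by rewrite -occP ?Ht.
  have H2 : i < count (pred1 false) (take q.+1 w) by apply: leq_trans H1 (H _).
  rewrite -occP ?Hf // in H2.
  have Hne : nth 0 (letter_pos false w) i != q.
    apply/eqP => E.
    have := lp_mem (b := false) (w := w) (i := i); rewrite E /q lp_mem ?Ht ?Hf //.
    by move/(_ Hi).
  by rewrite ltn_neqAle Hne -ltnS.
move=> H t.
case Ec: (count (pred1 true) (take t w)) => [|c]; first by [].
have Hc : c < n by rewrite -Ht -Ec; apply: count_take_le.
have Hq : nth 0 (letter_pos true w) c < t by rewrite occP ?Ht // Ec.
have Hp : nth 0 (letter_pos false w) c < t by apply: ltn_trans (H _ Hc) Hq.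
by rewrite occP ?Hf in Hp.
Qed.

Lemma dyck_iff n w : size w = n.*2 -> count (pred1 false) w = n -> count (pred1 true) w = n ->
  is_dyck n w <->
  (forall i, i < n -> nth 0 (letter_pos false w) i < nth 0 (letter_pos true w) i).
Proof.
move=> Hs Hf Ht; rewrite -prefix_iff // /is_dyck Hs Hf Ht !eqxx !andTb.
split.
  move/allP => H t.
  case: (leqP t (n.*2)) => Htn.
    by apply: H; rewrite mem_iota /= add0n ltnS.
  rewrite take_oversize ?Hs ?Hf ?Ht //; exact: ltnW.
by move=> H; apply/allP => t _; apply: H.
Qed.

Definition unconv (x : bool * bool) : option bool :=
  if x.1 then Some true else if x.2 then Some false else None.

Definition mz (s : seq (bool * bool)) : seq (option bool) :=
  [seq unconv x | x <- s & x != (true, true)].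

Arguments mz : simpl never.

Lemma mz_cons x s : mz (x :: s) = if x != (true, true) then unconv x :: mz s else mz s.
Proof. by rewrite /mz /=; case: ifP. Qed.

Lemma allS (P : nat -> Prop) m :
  (forall i, i <= m.+1 -> P i) <-> P 0 /\ (forall i, i <= m -> P i.+1).
Proof.
split; first by move=> H; split => [|i Hi]; apply: H.
by move=> [H0 H] [|i] Hi //; apply: H.
Qed.

Lemma MZ h u v : size u = size v ->
  motzkin_from h (mz (zip u v)) <->
  ((forall i, i <= size u -> cF (take i u) <= h + cF (take i v)) /\ cF u = h + cF v).
Proof.
elim: u h v => [|a u IH] h [|b v] //=.
  move=> _; split; first by move/eqP => ->; split.
  by move=> [_ H]; apply/eqP; lia'.
move=> [Hs].
rewrite allS /cF /=.
case: a; case: b; rewrite mz_cons /=.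
- rewrite IH //; rewrite /cF.
  split=> [[H1 H2]|[[H0 H1] H2]]; (split; [try split|]) => //; try lia';
    by move=> i Hi; have := H1 _ Hi; lia'.
- rewrite IH //; rewrite /cF.
  split=> [[H1 H2]|[[H0 H1] H2]]; (split; [try split|]) => //; try lia';
    by move=> i Hi; have := H1 _ Hi; lia'.
- split.
    move/andP => [Hh]; rewrite IH // /cF => -[H1 H2].
    split; [split|] => //; try lia';
    by move=> i Hi; have := H1 _ Hi; lia'.
  move=> [[H0 H1] H2].
  have Hh : 0 < h by have := H1 0 (leq0n _); rewrite !take0 /=; lia'.
  apply/andP; split => //.
  rewrite IH // /cF; split; last by lia'.
  by move=> i Hi; have := H1 _ Hi; lia'.
- rewrite IH //; rewrite /cF.
  split=> [[H1 H2]|[[H0 H1] H2]]; (split; [try split|]) => //; try lia';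
    by move=> i Hi; have := H1 _ Hi; lia'.
Qed.

Lemma FL h u v : size u = size v ->
  (forall i, i <= size u -> cF (take i u) <= h + cF (take i v)) ->
  flat0_from h (mz (zip u v)) =
  count (fun j => (~~ nth true u j && ~~ nth true v j) && (h + cF (take j v) == cF (take j u)))
        (iota 0 (size u)).
Proof.
elim: u h v => [|a u IH] h [|b v] //= [Hs] Hv.
have Hh : (a == false) <= h + (b == false).
  by have := Hv 1 isT; rewrite /cF /= !take0 /=; lia'.
have Hv' : forall i, i <= size u ->
    (a == false) + cF (take i u) <= h + ((b == false) + cF (take i v)).
  by move=> i Hi; have := Hv i.+1 Hi; rewrite /cF /=.
rewrite (iotaDl 1 0) count_map mz_cons.
clear Hv; case: a Hh Hv'; case: b => /= Hh Hv'.
all: rewrite ?addn0 ?add0n; rewrite IH //; try (by move=> i Hi; have := Hv' i Hi; lia').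
all: try congr (_ + _).
all: apply: eq_count => j /=; rewrite add1n /cF /= ?add0n; congr (_ && _).
all: by apply/idP/idP => /eqP H; apply/eqP; lia'.
Qed.

Lemma count01 (s : seq bool) : count (pred1 false) s + count (pred1 true) s = size s.
Proof. by elim: s => [|c s IH] //=; case: c => /=; lia'. Qed.

Lemma cF_rcons s x : cF (rcons s x) = cF s + (x == false).
Proof. by rewrite /cF -cats1 count_cat /= addn0. Qed.

Lemma dyck_struct n w : 0 < n -> size w = n.*2 ->
  count (pred1 false) w = n -> count (pred1 true) w = n ->
  is_dyck n w <-> head true w = false /\
     (forall i, i < n -> cF (take i (nx false w)) <= cF (take i (nx true w))).
Proof.
move=> Hn Hs Hf Ht; rewrite dyck_iff //.
split.
  move=> H.
  have Hh : head true w = false.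
    by have := H 0 Hn; rewrite run_cmp ?Hf ?Ht // !take0; case: (head true w).
  split => // i Hi.
  by have := H i Hi; rewrite run_cmp ?Hf ?Ht // Hh.
by move=> [Hh H] i Hi; rewrite run_cmp ?Hf ?Ht // Hh; apply: H.
Qed.

Lemma hit_core n w j : is_dyck n w -> size w = n.*2 ->
  count (pred1 false) w = n -> count (pred1 true) w = n -> j.+1 < n ->
  ((count (pred1 false) (take (j.+1).*2 w) == j.+1) &&
   (count (pred1 true) (take (j.+1).*2 w) == j.+1))
  = (~~ nth true (nx false w) j && ~~ nth true (nx true w) j) &&
    (cF (take j (nx true w)) == cF (take j (nx false w))).
Proof.
move=> Hd Hs Hf Ht Hj.
have Hn : 0 < n by lia.
have Hpq := (dyck_iff Hs Hf Ht).1 Hd.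
have Hpre := (prefix_iff Hf Ht).2 Hpq.
have [Hh Hpc] := (dyck_struct Hn Hs Hf Ht).1 Hd.
set P := fun k => nth 0 (letter_pos false w) k.
set Q := fun k => nth 0 (letter_pos true w) k.
have step1 : ((count (pred1 false) (take (j.+1).*2 w) == j.+1) &&
   (count (pred1 true) (take (j.+1).*2 w) == j.+1)) = (Q j < P j.+1).
  apply/idP/idP.
    move/andP => [/eqP H0 /eqP H1].
    have a : Q j < (j.+1).*2 by rewrite /Q occP ?Ht ?H1 //; lia.
    have b : ~~ (P j.+1 < (j.+1).*2) by rewrite /P occP ?Hf ?H0 ?ltnn //.
    lia.
  move=> H.
  set t := P j.+1.
  have a : j < count (pred1 true) (take t w) by rewrite -occP ?Ht //; lia.
  have b : count (pred1 false) (take t w) <= j.+1.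
    have := occP (b := false) (w := w) (i := j.+1) t.
    rewrite ltnn Hf => /(_ Hj) /esym /negbT; rewrite -leqNgt.
    by [].
  have c := Hpre t.
  have d := count01 (take t w); rewrite size_take in d.
  move: d; case: ifP => Ht' d.
    have Et : t = (j.+1).*2 by lia'.
    by rewrite -Et; apply/andP; split; apply/eqP; lia'.
  by exfalso; lia'.
have step2 : (Q j < P j.+1) = ~~ (P j.+1 < Q j).
  have Hne : Q j != P j.+1.
    apply/eqP => E.
    have := lp_mem (b := false) (w := w) (i := j.+1).
    rewrite Hf -/(P j.+1) -E /Q lp_mem ?Ht //; last by lia.
    by move/(_ Hj).
  by rewrite ltn_neqAle Hne /= leqNgt.
rewrite step1 step2 /P /Q run_cmp ?Hf ?Ht //; last by lia.
rewrite Hh.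
have Hsu : j < size (nx false w) by rewrite size_nx Hf; lia.
have Hsv : j < size (nx true w) by rewrite size_nx Ht; lia.
have H1 := Hpc j (ltnW Hj).
have H2 := Hpc j.+1 Hj.
rewrite (take_nth true Hsu) (take_nth true Hsv) !cF_rcons in H2 *.
move: H1 H2.
case: (nth true (nx false w) j); case: (nth true (nx true w) j).
all: move=> H1 H2; lia'.
Qed.

Lemma hits_eq n w : 0 < n -> is_dyck n w -> size w = n.*2 ->
  count (pred1 false) w = n -> count (pred1 true) w = n ->
  hits n w = 2 + count (fun j =>
     (~~ nth true (take n.-1 (nx false w)) j && ~~ nth true (take n.-1 (nx true w)) j)
     && (0 + cF (take j (take n.-1 (nx true w))) == cF (take j (take n.-1 (nx false w)))))
     (iota 0 n.-1).
Proof.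
move=> Hn Hd Hs Hf Ht.
have E : iota 0 n.+1 = 0 :: iota 1 n.-1 ++ [:: n].
  case: (n) Hn => [|m] // _.
  change (iota 0 m.+2) with (0 :: iota 1 m.+1); congr (_ :: _).
  change (m.+1.-1) with m.
  by rewrite -[m.+1]addn1 iotaD add1n addn1.
rewrite /hits E /= count_cat /= (iotaDl 1 0) count_map take0 -Hs take_size Hf Ht !eqxx /=.
rewrite (_ : forall a, 1 + (a + (1 + 0)) = 2 + a); last by move=> a; lia.
congr (_ + _); apply: eq_in_count => j; rewrite mem_iota => /andP [_ Hj].
rewrite /preim /= add1n (hit_core (n:=n)) //; last by lia.
rewrite !nth_take // !take_takel //; lia.
Qed.

Lemma blocks_nseq a l c : blocks (nseq a true ++ l) c = blocks l (c + a).
Proof. by elim: a c => [|a IH] c /=; rewrite ?addn0 // IH addSnnS. Qed.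

Lemma size_blocks l c : size (blocks l c) = (count negb l).+1.
Proof. by elim: l c => [|b l IH] c //=; case: b => /=; rewrite IH. Qed.

Lemma blocks_head l c : exists x X, blocks l c = x :: X /\ c <= x.
Proof.
elim: l c => [|b l IH] c /=; first by exists c, [::].
case: b; last by exists c, (blocks l 1).
have [x [X [E H]]] := IH c.+1; exists x, X; split => //; exact: ltnW.
Qed.

Definition isL (x : bool * bool) : bool := x == (true, true).

Definition conv (o : option bool) : bool * bool :=
  match o with Some true => (true, false) | Some false => (false, true) | None => (false, false) end.

Lemma conv_unconv x : x != (true, true) -> conv (unconv x) = x.
Proof. by case: x => [[] []]. Qed.

Lemma unconv_conv o : unconv (conv o) = o.
Proof. by case: o => [[]|]. Qed.

Lemma conv_notL o : conv o != (true, true).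
Proof. by case: o => [[]|]. Qed.

Fixpoint insL (c : nat) (X : seq nat) (m : seq (option bool)) : seq (bool * bool) :=
  match X with
  | [::] => [::]
  | x :: X' => nseq (x - c) (true, true) ++
      (if X' is [::] then [::] else conv (head None m) :: insL 1 X' (behead m))
  end.

Lemma insL_step c x X m : c < x ->
  insL c (x :: X) m = (true, true) :: insL c.+1 (x :: X) m.
Proof. by move=> H /=; rewrite (_ : x - c = (x - c.+1).+1) //; lia. Qed.

Lemma insL_blocks s c : 0 < c -> insL c (blocks (map isL s) c) (mz s) = s.
Proof.
elim: s c => [|y s IH] c Hc /=; first by rewrite subnn.
rewrite mz_cons /isL.
case: eqP => [->|/eqP Hy] /=.
  have [x [X [E H]]] := blocks_head (map isL s) c.+1.
  move: (IH c.+1 isT); rewrite /isL E => IH'.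
  by rewrite insL_step // IH'.
have [x [X [E _]]] := blocks_head (map isL s) 1.
move: (IH 1 isT); rewrite /isL E => IH'.
by rewrite -[in RHS]IH' subnn /= conv_unconv.
Qed.

Lemma mz_nseqL k s : mz (nseq k (true, true) ++ s) = mz s.
Proof. by elim: k => [|k IH] //=; rewrite mz_cons. Qed.

Lemma insL_props X c x m : c <= x -> all (fun y => 0 < y) X -> size m = size X ->
  [/\ blocks (map isL (insL c (x :: X) m)) c = x :: X,
      mz (insL c (x :: X) m) = m &
      size (insL c (x :: X) m) = x + sumn X - c].
Proof.
elim: X c x m => [|y Y IH] c x m Hcx HX Hm.
  case: m Hm => // _ /=.
  rewrite cats0 map_nseq -[nseq _ true]cats0 blocks_nseq size_nseq.
  split; first by congr [:: _]; lia.
    by elim: (x - c) => [|k IHk] //; rewrite /= mz_cons.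
  by lia.
case: m Hm => [|a m] //= [Hm].
move: HX => /= /andP [Hy HY].
have [E1 E2 E3] := IH 1 y m Hy HY Hm.
rewrite map_cat map_nseq blocks_nseq mz_nseqL /= mz_cons conv_notL /= unconv_conv.
rewrite {1}/isL (negbTE (conv_notL a)) /= E1 E2 size_cat size_nseq /= E3.
split => //; [congr (_ :: _); lia | lia].
Qed.

Lemma fc_eq n w : 0 < n -> count (pred1 false) w = n -> count (pred1 true) w = n ->
  free_composition n w =
  blocks (map isL (zip (take n.-1 (nx false w)) (take n.-1 (nx true w)))) 1.
Proof.
case: n => [|m] // _ Hf Ht; rewrite /free_composition /=.
congr (blocks _ 1).
have Hsu : size (nx false w) = m.+1 by rewrite size_nx.
have Hsv : size (nx true w) = m.+1 by rewrite size_nx.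
have Szu : size (take m (nx false w)) = m by rewrite size_takel // Hsu.
have Szv : size (take m (nx true w)) = m by rewrite size_takel // Hsv.
apply: (eq_from_nth (x0 := false)).
  by rewrite !size_map size_iota size_zip Szu Szv minnn.
rewrite size_map size_iota => i Hi.
rewrite (nth_map 0) ?size_iota // nth_iota // add1n.
rewrite (nth_map (false, false)); last by rewrite size_zip Szu Szv minnn.
rewrite nth_zip ?Szu ?Szv // !nth_take //.
rewrite /linked /occ /= !nx_link ?Hf ?Ht //.
by rewrite /isL; case: (nth false (nx false w) i); case: (nth false (nx true w) i).
Qed.

Lemma rcons_take_last s : 0 < size s -> last false s = false ->
  s = rcons (take (size s).-1 s) false.
Proof.
case/lastP: s => [|s x] // _; rewrite last_rcons => ->.
by rewrite size_rcons -cats1 take_size_cat // cats1.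
Qed.

Lemma size_mz s : size (mz s) = count (fun x => x != (true, true)) s.
Proof. by rewrite /mz size_map size_filter. Qed.

Lemma card_le (A B : finType) (b : B) na nb (PA : pred (seq A)) (PB : pred (seq B))
  (F : seq A -> seq B) (G : seq B -> seq A) :
  (forall s, size s = na -> PA s -> [/\ size (F s) = nb, PB (F s) & G (F s) = s]) ->
  #|[set s : na.-tuple A | PA s]| <= #|[set t : nb.-tuple B | PB t]|.
Proof.
move=> H.
pose FF (s : na.-tuple A) : nb.-tuple B := insubd [tuple of nseq nb b] (F s).
have FFE : forall s : na.-tuple A, PA s -> val (FF s) = F s.
  move=> s Hs; have [E1 _ _] := H s (size_tuple s) Hs.
  by rewrite /FF insubdK // unfold_in E1.
rewrite -(card_in_imset (f := FF)).
  apply: subset_leq_card; apply/subsetP => t /imsetP [s]; rewrite inE => Hs ->.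
  have [_ E2 _] := H s (size_tuple s) Hs.
  by rewrite inE FFE.
move=> s s'; rewrite !inE => Hs Hs' E.
apply: val_inj.
have [_ _ E3] := H s (size_tuple s) Hs.
have [_ _ E3'] := H s' (size_tuple s') Hs'.
by rewrite /= -E3 -E3' -!FFE // E.
Qed.

Lemma card_bij (T1 T2 : finType) (x1 : T1) (x2 : T2) (n1 n2 : nat)
  (P1 : pred (seq T1)) (P2 : pred (seq T2))
  (f : seq T1 -> seq T2) (g : seq T2 -> seq T1) :
  (forall s, size s = n1 -> P1 s -> [/\ size (f s) = n2, P2 (f s) & g (f s) = s]) ->
  (forall t, size t = n2 -> P2 t -> [/\ size (g t) = n1, P1 (g t) & f (g t) = t]) ->
  #|[set s : n1.-tuple T1 | P1 s]| = #|[set t : n2.-tuple T2 | P2 t]|.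
Proof.
move=> Hf Hg; apply/eqP; rewrite eqn_leq.
by rewrite (card_le x2 Hf) (card_le x1 Hg).
Qed.

Lemma cF_take_rcons u i : i <= size u -> cF (take i (rcons u false)) = cF (take i u).
Proof. by move=> H; rewrite -cats1 takel_cat. Qed.

Lemma forward n x X' l w : 0 < n -> size w = n.*2 ->
  [&& is_dyck n w, free_composition n w == x :: X' & hits n w == l] ->
  [/\ size (mz (zip (take n.-1 (nx false w)) (take n.-1 (nx true w)))) = (size (x :: X')).-1,
      is_motzkin (mz (zip (take n.-1 (nx false w)) (take n.-1 (nx true w)))) &&
      (flat_zero (mz (zip (take n.-1 (nx false w)) (take n.-1 (nx true w)))) == l - 2) &
      dec n.*2 true
        (rcons (unzip1 (insL 1 (x :: X') (mz (zip (take n.-1 (nx false w)) (take n.-1 (nx true w)))))) false)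
        (rcons (unzip2 (insL 1 (x :: X') (mz (zip (take n.-1 (nx false w)) (take n.-1 (nx true w)))))) false) = w].
Proof.
move=> Hn Hsz /and3P [Hd /eqP Hfc /eqP Hh].
have /and4P [_ /eqP Hf /eqP Ht _] := Hd.
have [Hhead Hpc] := (dyck_struct Hn Hsz Hf Ht).1 Hd.
have HsU : size (nx false w) = n by rewrite size_nx.
have HsV : size (nx true w) = n by rewrite size_nx.
have EU : nx false w = rcons (take n.-1 (nx false w)) false.
  by rewrite -{1}HsU; apply: rcons_take_last; rewrite ?HsU ?last_nx.
have EV : nx true w = rcons (take n.-1 (nx true w)) false.
  by rewrite -{1}HsV; apply: rcons_take_last; rewrite ?HsV ?last_nx.
have Hsu : size (take n.-1 (nx false w)) = n.-1 by rewrite size_takel // HsU leq_pred.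
have Hsv : size (take n.-1 (nx true w)) = n.-1 by rewrite size_takel // HsV leq_pred.
have Hhits := hits_eq Hn Hd Hsz Hf Ht.
have Hfc' := fc_eq Hn Hf Ht.
have Ew : w = head true w :: behead w.
  by case: (w) Hsz => [|c w'] //= H; move: H Hn; rewrite -muln2; lia.
have e2 := nx_cnt (head true w) (behead w); rewrite -Ew Hhead in e2.
have Hdec := dec_enc (w := w) (f := n.*2) (ltac:(rewrite Hsz //)); rewrite Hhead /= in Hdec.
move: Hpc Hhits Hfc' EU EV e2 Hdec Hsu Hsv.
move: (nx false w) (nx true w) => U V Hpc Hhits Hfc' EU EV e2 Hdec Hsu Hsv.
move: EU EV Hpc Hhits Hfc' e2 Hdec Hsu Hsv.
move: (take n.-1 U) (take n.-1 V) => u v -> -> Hpc Hhits Hfc' e2 Hdec Hsu Hsv.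
have Hpc' : forall i, i <= size u -> cF (take i u) <= 0 + cF (take i v).
  move=> i Hi; have := Hpc i (ltac:(lia)).
  by rewrite !cF_take_rcons // Hsv -Hsu.
have Htot : cF u = 0 + cF v.
  have := Hpc n.-1 (ltac:(lia)).
  rewrite !cF_take_rcons ?Hsu ?Hsv // !take_oversize ?Hsu ?Hsv //.
  move: e2; rewrite !cF_rcons /=; case: (~~ _) => /=; lia.
have Hsz' : size u = size v by rewrite Hsu Hsv.
have Hbl : blocks (map isL (zip u v)) 1 = x :: X' by rewrite -Hfc' Hfc.
split.
- rewrite -Hbl size_blocks /= size_mz count_map.
  by apply: eq_count => y.
- apply/andP; split; first by apply/(MZ 0 Hsz').
  rewrite /flat_zero FL // -Hh Hhits Hsu; apply/eqP; lia.
- rewrite -Hbl insL_blocks // unzip1_zip ?unzip2_zip ?Hsz' //.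
Qed.

Lemma backward n x X' l m : 0 < n -> all (fun y => 0 < y) (x :: X') -> sumn (x :: X') = n ->
  2 <= l -> size m = (size (x :: X')).-1 -> is_motzkin m && (flat_zero m == l - 2) ->
  forall w, w = dec n.*2 true (rcons (unzip1 (insL 1 (x :: X') m)) false)
                              (rcons (unzip2 (insL 1 (x :: X') m)) false) ->
  [/\ size w = n.*2, [&& is_dyck n w, free_composition n w == x :: X' & hits n w == l] &
      mz (zip (take n.-1 (nx false w)) (take n.-1 (nx true w))) = m].
Proof.
move=> Hn /andP [Hx HX'] Hsum Hl Hm /andP [Hmot /eqP Hflat] w Ew.
rewrite /flat_zero in Hflat.
have [E1 E2 E3] := insL_props (c := 1) Hx HX' Hm.
move: E1 E2 E3 Ew; move: (insL 1 (x :: X') m) => s E1 E2 E3 Ew.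
have Hs : size s = n.-1 by rewrite E3 -Hsum /=; lia.
have Hsu : size (unzip1 s) = n.-1 by rewrite size_map.
have Hsv : size (unzip2 s) = n.-1 by rewrite size_map.
rewrite -(zip_unzip s) in E1 E2.
move: E1 E2 Ew Hsu Hsv; move: (unzip1 s) (unzip2 s) => u v E1 E2 Ew Hsu Hsv.
have Hsz' : size u = size v by rewrite Hsu Hsv.
have [Hpc Htot] := (MZ 0 Hsz').1 (ltac:(rewrite E2; exact: Hmot)).
have [] := enc_dec (f := n.*2) (z := true) (u := rcons u false) (v := rcons v false).
- by rewrite !size_rcons Hsu -muln2; lia.
- by rewrite !cF_rcons Htot.
- by rewrite last_rcons.
- by rewrite last_rcons.
rewrite -Ew => D1 D2 D3 D4.
have Hf : count (pred1 false) w = n by rewrite -size_nx D1 size_rcons Hsu prednK.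
have Ht : count (pred1 true) w = n by rewrite -size_nx D2 size_rcons Hsv prednK.
have Hsz : size w = n.*2 by rewrite D3 !size_rcons Hsu Hsv prednK // addnn.
have Hhead : head true w = false.
  case E: (rcons u false) D4 => [|a r] D4.
    by move: (size_rcons u false); rewrite E.
  by case: (w) D4 => //= c w' [->].
have Hd : is_dyck n w.
  apply/(dyck_struct Hn Hsz Hf Ht); split => // i Hi.
  rewrite D1 D2 !cF_take_rcons ?Hsu ?Hsv; try lia.
  by have := Hpc i (ltac:(lia)).
have Tu : take n.-1 (nx false w) = u by rewrite D1 -cats1 take_size_cat.
have Tv : take n.-1 (nx true w) = v by rewrite D2 -cats1 take_size_cat.
split => //; last by rewrite Tu Tv E2.
apply/and3P; split => //.
  by rewrite fc_eq // Tu Tv E1.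
rewrite hits_eq // Tu Tv -Hsu -FL // E2 Hflat; apply/eqP; lia.
Qed.

Unset Implicit Arguments.

Theorem lemma4p5 (n : nat) (X : seq nat) (l : nat) :
  0 < n -> is_composition n X -> 2 <= l ->
  #|[set w : (n.*2).-tuple bool |
      [&& is_dyck n w, free_composition n w == X & hits n w == l]]|
  = #|[set m : ((size X).-1).-tuple (option bool) |
      is_motzkin m && (flat_zero m == l - 2)]|.
Proof.
move=> Hn /andP [HXpos /eqP HXsum] Hl.
case: X HXpos HXsum => [|x X'] HXpos HXsum; first by move: HXsum => /= E; lia.
apply: (card_bij false None
  (P1 := fun s : seq bool => [&& is_dyck n s, free_composition n s == x :: X' & hits n s == l])
  (P2 := fun s : seq (option bool) => is_motzkin s && (flat_zero s == l - 2))
  (f := fun w => mz (zip (take n.-1 (nx false w)) (take n.-1 (nx true w))))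
  (g := fun m => dec n.*2 true (rcons (unzip1 (insL 1 (x :: X') m)) false)
                              (rcons (unzip2 (insL 1 (x :: X') m)) false))).
  by move=> s Hs HP; apply: forward.
move=> t Ht HP.
by have [] := backward Hn HXpos HXsum Hl Ht HP (erefl _).
Qed.
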